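(* Let $q$ be a prime power with $q\equiv 1\pmod 4$, let $b\in\mathbb{F}_q$ with $b^2=-1$, let $f(x)=(x+1)(x+b)\in\mathbb{F}_q[x]$, and let $\alpha\in\mathbb{F}_{q^4}$ be normal over $\mathbb{F}_q$. Let $u,v\in\mathbb{F}_q^*$. If $\gamma=u\,L_f(\alpha)+v$ is primitive in $\mathbb{F}_{q^4}$, then $\gamma$ is $2$-normal over $\mathbb{F}_q$.
   Context: For $h(x)=\sum_i a_ix^i\in\mathbb{F}_q[x]$, $L_h(\alpha)=\sum_i a_i\alpha^{q^i}$. An element $\alpha\in\mathbb{F}_{q^n}$ is normal over $\mathbb{F}_q$ if $\alpha,\alpha^q,\dots,\alpha^{q^{n-1}}$ form an $\mathbb{F}_q$-basis of $\mathbb{F}_{q^n}$; it is primitive if it generates $\mathbb{F}_{q^n}^*$. For $\alpha\in\mathbb{F}_{q^n}$ let $g_\alpha(x)=\sum_{i=0}^{n-1}\alpha^{q^i}x^{n-1-i}$; $\alpha$ is $k$-normal over $\mathbb{F}_q$ if $\gcd(x^n-1,g_\alpha(x))$ in $\mathbb{F}_{q^n}[x]$ has degree $k$ (here $n=4$). *)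

(* Defs.v *)
(* F_q is modelled by F : finFieldType (q = #|F|),
   F_{q^n} by L : fieldExtType F (finite dimensional over F). *)
From HB Require Import structures.
From mathcomp Require Import all_boot all_order all_algebra all_field.
Set Implicit Arguments. Unset Strict Implicit. Unset Printing Implicit Defensive.
Import GRing.Theory.
Local Open Scope ring_scope.

Definition Lpoly (F : finFieldType) (L : fieldExtType F) (h : {poly F}) (a : L) : L :=
  \sum_(i < size h) h`_i *: a ^+ (#|F| ^ i).

Definition normal_elt (F : finFieldType) (L : fieldExtType F) (a : L) : Prop :=
  basis_of fullv [seq a ^+ (#|F| ^ i) | i <- iota 0 (\dim {:L})].

Definition primitive_elt (F : finFieldType) (L : fieldExtType F) (a : L) : Prop :=
  a != 0 /\ forall y : L, y != 0 -> exists k : nat, y = a ^+ k.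

Definition g_poly (F : finFieldType) (L : fieldExtType F) (a : L) : {poly L} :=
  \sum_(i < \dim {:L}) (a ^+ (#|F| ^ i))%:P * 'X^(\dim {:L} - 1 - i).

Definition k_normal (F : finFieldType) (L : fieldExtType F) (k : nat) (a : L) : Prop :=
  (size (gcdp ('X^(\dim {:L}) - 1) (g_poly a))).-1 = k.

(* Main.v *)
Require Import Defs.
From HB Require Import structures.
From mathcomp Require Import all_boot all_order all_algebra all_field.
From mathcomp Require Import ring zify.
Import GRing.Theory.
Local Open Scope ring_scope.

Section Frob.
Variables (F : finFieldType) (L : fieldExtType F).
Local Notation q := #|F|.

Lemma frobD (x y : L) : (x + y) ^+ q = x ^+ q + y ^+ q.
Proof.
have [p _ pcharFp] := finPcharP F.
have hq : #|F| = (p ^ logn p #|F|)%N := card_pprimeChar pcharFp.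
rewrite hq; move: (logn p _) => n.
have pL : p \in [pchar L] by rewrite (pchar_lalg L).
elim: n => [|n IHn]; first by rewrite !expr1.
rewrite expnSr !exprM {}IHn.
by rewrite -!(pFrobenius_autE pL) rmorphD.
Qed.

Lemma frob_alg (a : F) : (a%:A : L) ^+ q = a%:A.
Proof. have h := expf_card a. move: #|F| h => n h.
by rewrite exprZn expr1n h. Qed.

Lemma frobZ (a : F) (x : L) : (a *: x) ^+ q = a *: x ^+ q.
Proof. by rewrite exprZn expf_card. Qed.

Lemma frob_dim (x : L) : x ^+ (q ^ \dim {:L}) = x.
Proof.
have := @Fermat's_little_theorem F L (aspacef L) x.
rewrite memvf => /esym/eqP. exact.
Qed.

Lemma card_L : #|finvect_type L| = (q ^ \dim {:L})%N.
Proof.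
pose cl := Vector.class (finvect_type L : vectType F).
have h1 := @card_vspace F (finvect_type L) cl fullv.
have h2 := @card_vspacef F (finvect_type L) cl.
rewrite -h2 h1; exact.
Qed.

Lemma few_roots (N : nat) : (0 < N)%N -> (forall y : L, y != 0 -> y ^+ N = 1) ->
  ((q ^ \dim {:L}).-1 <= N)%N.
Proof.
move=> N0 hN.
pose rs := enum [pred y : finvect_type L | y != 0].
have := @max_poly_roots L ('X^N - 1) rs.
rewrite -polyC1 size_XnsubC //.
have -> : size rs = (#|finvect_type L|.-1)%N.
  rewrite -cardE -(cardC1 (0 : finvect_type L)). apply: eq_card => y. by rewrite !inE.
rewrite card_L.
move=> H; have {}H := H _ _ (enum_uniq _).
apply: H.
  by rewrite -size_poly_eq0 size_XnsubC.
apply/allP => y hy0; have hy : y ^+ N = 1 by apply: hN; move: hy0; rewrite /rs (@mem_enum (finvect_type L)).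
by rewrite /root !hornerE hy subrr.
Qed.
End Frob.

Lemma frobB (F : finFieldType) (L : fieldExtType F) (x y : L) :
  (x - y) ^+ #|F| = x ^+ #|F| - y ^+ #|F|.
Proof. by rewrite -scaleN1r frobD frobZ scaleN1r. Qed.

Lemma frobX (F : finFieldType) (L : fieldExtType F) (x : L) i :
  (x ^+ (#|F| ^ i)) ^+ #|F| = x ^+ (#|F| ^ i.+1).
Proof. by rewrite -exprM expnSr. Qed.

Theorem lemma7p1 (F : finFieldType) (L : fieldExtType F)
  (hdim : \dim {:L} = 4%N) (hq : (#|F| %% 4 = 1)%N)
  (b : F) (hb : b ^+ 2 = -1)
  (alpha : L) (halpha : normal_elt alpha)
  (u v : F) (hu : u != 0) (hv : v != 0) :
  let f : {poly F} := ('X + 1) * ('X + b%:P) in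
  let gamma : L := u *: Lpoly f alpha + v%:A in
  primitive_elt gamma -> k_normal 2 gamma.
Proof.
move=> f gamma [g0 prim].
have q2 : (1 < #|F|)%N := finNzRing_gt1 F.
have b1 : 1 - b != 0.
  apply/negP => /eqP hb1.
  have eb : b = 1 by apply/eqP; rewrite -subr_eq0 -opprB hb1 oppr0.
  have h2 : 2 \in [pchar F].
    rewrite inE /=; have := hb; rewrite eb expr1n => /eqP; rewrite -addr_eq0.
    by rewrite mulr2n.
  have := card_pprimeChar h2; move: (logn _ _) => n hn.
  move: hq q2; rewrite [#|F|]hn.
  case: n {hn} => [|[|n]] //.
  by rewrite !expnS mulnA modnMr.
have hf : f = b%:P + (1 + b)%:P * 'X + 'X^2.
  by rewrite /f polyCD polyC1; ring.
have hsz : size f = 3%N.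
  rewrite /f size_mul ?polyC1 ?size_XaddC //; rewrite -size_poly_eq0 size_XaddC //.
have hLf : Lpoly f alpha = b *: alpha ^+ (#|F| ^ 0) + (1 + b) *: alpha ^+ (#|F| ^ 1)
     + alpha ^+ (#|F| ^ 2).
  rewrite /Lpoly hsz !big_ord_recl big_ord0 addr0 /= hf.
  rewrite !coefD !coefC !coefCM !coefX !coefXn /=.
  have -> : bump 0 0 = 1%N by [].
  have -> : bump 0 1 = 2%N by [].
  by rewrite !mulr0 !mulr1 !addr0 !add0r scale1r addrA.
set a0 := alpha ^+ (#|F| ^ 0) in hLf.
set a1 := alpha ^+ (#|F| ^ 1) in hLf.
set a2 := alpha ^+ (#|F| ^ 2) in hLf.
pose a3 := alpha ^+ (#|F| ^ 3).
have ha0 : a0 ^+ #|F| = a1 by rewrite frobX.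
have ha1 : a1 ^+ #|F| = a2 by rewrite frobX.
have ha2 : a2 ^+ #|F| = a3 by rewrite frobX.
have ha3 : a3 ^+ #|F| = a0.
  by rewrite frobX -hdim frob_dim /a0 expn0 expr1.
set B : L := b%:A. set U : L := u%:A. set V : L := v%:A.
set P : L := (1 + b)%:A. set K : L := ((1 - b)^-1 * u)%:A.
have hP : P = 1 + B by rewrite /P scalerDl scale1r.
have h1B : 1 - B = (1 - b)%:A by rewrite scalerBl scale1r.
have hU : U = K * (1 - B).
  by rewrite h1B mulr_algl scalerA mulrAC mulVf // mul1r.
have hB2 : B ^+ 2 = -1 by rewrite exprZn expr1n hb scaleN1r.
have hBq : B ^+ #|F| = B by apply: frob_alg.
have hUq : U ^+ #|F| = U by apply: frob_alg.
have hVq : V ^+ #|F| = V by apply: frob_alg.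
have hPq : P ^+ #|F| = P by apply: frob_alg.
have hKq : K ^+ #|F| = K by apply: frob_alg.
have hg : gamma = U * (B * a0 + P * a1 + a2) + V.
  by rewrite /gamma hLf /U /B /P !mulr_algl.
clearbody gamma.
set T := a0 + a1 + a2 + a3.
set c := K * T + V.
have hgq : gamma ^+ #|F| = B * gamma + (1 - B) * c.
  rewrite hg !(frobD, exprMn) hUq hBq hPq hVq ha0 ha1 ha2 /c /T hU hP.
  apply/eqP; rewrite -subr_eq0; apply/eqP.
  transitivity ((B ^+ 2 + 1) * (- (K * (1 - B)) * (a0 + a1))); first by ring.
  by rewrite hB2 addNr mul0r.
have hcq : c ^+ #|F| = c.
  by rewrite /c /T !(frobD, exprMn) hKq hVq ha0 ha1 ha2 ha3; ring.
set w := gamma - c.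
have hwq : w ^+ #|F| = B * w.
  by rewrite /w frobB hgq hcq; ring.
have hgi : forall i, gamma ^+ (#|F| ^ i) = c + B ^+ i * w.
  elim => [|i IH]; first by rewrite expn0 expr1 expr0 mul1r /w; ring.
  by rewrite -frobX IH frobD exprMn hcq hwq -exprM mulnC exprM hBq exprS; ring.
have contra : gamma ^+ (#|F|.-1 * 4) = 1 -> False.
  move=> h.
  have N0 : (0 < #|F|.-1 * 4)%N by rewrite muln_gt0 andbT -ltnS (prednK (ltnW q2)).
  have hall : forall y : L, y != 0 -> y ^+ (#|F|.-1 * 4) = 1.
    by move=> y /prim [k ->]; rewrite -exprM mulnC exprM h expr1n.
  have := @few_roots F L (#|F|.-1 * 4) N0 hall.
  rewrite hdim.
  have -> : (#|F| ^ 4 = #|F| * #|F| * #|F| * #|F|)%N by rewrite !expnS expn0 muln1 !mulnA.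
  move: q2; move: (#|F|) => n hn.
  have : (2 * 2 * 2 * n <= n * n * n * n)%N by apply: leq_mul => //; apply: leq_mul => //; apply: leq_mul.
  clear -hn; lia.
have hqS : forall x : L, x ^+ #|F| = x ^+ #|F|.-1 * x.
  by move=> x; rewrite -exprSr prednK // ltnW.
have c0 : c != 0.
  apply/negP => /eqP c0; apply: contra.
  have hw : w = gamma by rewrite /w c0 subr0.
  move: hwq; rewrite hw hqS => /(mulIf g0) hg1.
  by rewrite exprM hg1 -[4%N]/(2 * 2)%N exprM hB2 sqrrN expr1n.
have w0 : w != 0.
  apply/negP => /eqP w0; apply: contra.
  have hw : c = gamma by apply/eqP; rewrite eq_sym -subr_eq0 -/w w0.
  have : gamma ^+ #|F|.-1 * gamma = 1 * gamma by rewrite mul1r -hqS -hw.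
  move=> /(mulIf g0) hg1.
  by rewrite exprM hg1 expr1n.
have nB1 : 1 - B != 0 by rewrite h1B scaler_eq0 oner_eq0 orbF.
rewrite /k_normal /g_poly hdim !big_ord_recl big_ord0 /=.
have e1 : bump 0 0 = 1%N by [].
have e2 : bump 0 1 = 2%N by [].
have e3 : bump 0 2 = 3%N by [].
rewrite e1 e2 e3 !hgi.
have -> : (4 - 1 - 0 = 3)%N by [].
have -> : (4 - 1 - 1 = 2)%N by [].
have -> : (4 - 1 - 2 = 1)%N by [].
have -> : (4 - 1 - 3 = 0)%N by [].
set Bp : {poly L} := B%:P.
have hB2p : Bp ^+ 2 = -1 by rewrite /Bp -rmorphXn hB2 rmorphN1.
set Q0 : {poly L} := ('X + 1) * ('X + Bp).
set Q1 : {poly L} := ('X - 1) * ('X - Bp).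
set h : {poly L} := c%:P * ('X - Bp) + w%:P * ('X - 1).
have hX4 : ('X^4 - 1 : {poly L}) = Q0 * Q1.
  apply/eqP; rewrite -subr_eq0; apply/eqP.
  transitivity ((Bp ^+ 2 + 1) * ('X^2 - 1)); first by rewrite /Q0 /Q1; ring.
  by rewrite hB2p addNr mul0r.
have hci : forall i, (c + B ^+ i * w)%:P = c%:P + Bp ^+ i * w%:P.
  by move=> i; rewrite polyCD polyCM rmorphXn.
rewrite !addr0 !hci.
set G := (X in gcdp _ X).
have hG : G = Q0 * h.
  apply/eqP; rewrite -subr_eq0; apply/eqP.
  transitivity ((Bp ^+ 2 + 1) * (c%:P * ('X + 1) + w%:P * ('X + Bp))); first by rewrite /G /Q0 /h; ring.
  by rewrite hB2p addNr mul0r.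
rewrite hX4 hG (eqp_size (gcdp_mul2l Q0 Q1 h)).
have cop : coprimep Q1 h.
  rewrite /Q1 coprimepMl; apply/andP; split; rewrite coprimep_sym.
    rewrite -polyC1 coprimep_XsubC /root /h !hornerE.
    by rewrite subrr mulr0 addr0 mulf_neq0.
  rewrite coprimep_XsubC /root /h !hornerE.
  by rewrite subrr mulr0 add0r mulf_neq0 // -opprB oppr_eq0.
have sz1 : size (gcdp Q1 h) = 1%N by apply/eqP.
have Q00 : size Q0 = 3%N.
  rewrite /Q0 -polyC1 size_mul ?size_XaddC // -size_poly_eq0 size_XaddC //.
rewrite size_mul ?Q00 ?sz1 // -size_poly_eq0 ?Q00 ?sz1 //.
Qed.
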